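(* Let $G = K_2 \otimes K_n$. If $n = 2$, then $G$ is disconnected. If $n \geq 3$, then $\dim(G) = n-1$.
   Context: $K_r$ is the complete graph on $r$ vertices. The tensor product $G\otimes H$ has vertex set $V(G)\times V(H)$, with $(u,v)$ adjacent to $(x,y)$ iff $ux\in E(G)$ and $vy\in E(H)$. For a connected graph and an ordered set $W=\{w_1,\dots,w_k\}$ of vertices, $r(v\mid W)=(d(v,w_1),\dots,d(v,w_k))$; $W$ is resolving if distinct vertices have distinct representations; $\dim(G)$ is the minimum size of a resolving set. *)

(* Defs.v *)
From mathcomp Require Import all_boot.
Set Implicit Arguments. Unset Strict Implicit. Unset Printing Implicit Defensive.

Definition complete_graph (r : nat) : rel 'I_r := fun i j => i != j.
Arguments complete_graph r : clear implicits.

Definition tensor_graph (T U : finType) (e1 : rel T) (e2 : rel U) : rel (T * U) :=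
  fun x y => e1 x.1 y.1 && e2 x.2 y.2.

Definition connected_graph (T : finType) (e : rel T) : Prop :=
  forall u v : T, connect e u v.

Definition walk (T : finType) (e : rel T) (u v : T) (k : nat) : bool :=
  [exists p : k.-tuple T, path e u p && (last u p == v)].

(* Graph distance: the least length of a u-v walk (= shortest path length).
   In a connected graph a shortest path has length < #|T|; for unreachable
   pairs the value #|T| is a junk default. *)
Definition dist (T : finType) (e : rel T) (u v : T) : nat :=
  find (walk e u v) (iota 0 #|T|).

Definition resolving (T : finType) (e : rel T) (W : {set T}) : bool :=
  [forall x : T, forall y : T,
     [forall w in W, dist e x w == dist e y w] ==> (x == y)].

Definition metric_dim (T : finType) (e : rel T) : nat :=
  #| [arg min_(W < [set: T] | resolving e W) #|W| ] |.

(* Main.v *)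
Require Import Defs.
From mathcomp Require Import all_boot zify.
Set Implicit Arguments. Unset Strict Implicit. Unset Printing Implicit Defensive.

Lemma walk0 (T : finType) (e : rel T) u v : walk e u v 0 = (u == v).
Proof.
apply/existsP/idP => [[p /andP[_ /eqP <-]]|/eqP <-]; first by rewrite (tuple0 p).
by exists [tuple]; rewrite /= eqxx.
Qed.

Lemma walkS (T : finType) (e : rel T) u v k :
  walk e u v k.+1 = [exists x, e u x && walk e x v k].
Proof.
apply/existsP/existsP => [[p]|[x /andP[Hux /existsP[t /andP[Ht Hl]]]]].
  case: p / tupleP => x t /= /andP[/andP[Hux Ht] Hl].
  by exists x; rewrite Hux; apply/existsP; exists t; rewrite Ht.
by exists [tuple of x :: t]; rewrite /= Hux Ht.
Qed.

Lemma walk1 (T : finType) (e : rel T) u v : walk e u v 1 = e u v.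
Proof.
rewrite walkS; apply/existsP/idP => [[z /andP[h]]|h].
  by rewrite walk0 => /eqP <-.
by exists v; rewrite walk0 eqxx andbT.
Qed.

Lemma walk_connect (T : finType) (e : rel T) u v k : walk e u v k -> connect e u v.
Proof.
move=> /existsP[p /andP[Hp /eqP Hl]]; apply/connectP; exists p => //.
Qed.

Lemma find_iota0 (P : pred nat) N d : d < N -> P d -> (forall k, k < d -> ~~ P k) ->
  find P (iota 0 N) = d.
Proof.
move=> dN Pd H.
rewrite -(subnKC (ltnW dN)) iotaD find_cat size_iota.
have -> : has P (iota 0 d) = false.
  by apply/hasPn => k; rewrite mem_iota add0n => /andP[_ /H].
by rewrite add0n -[(N - d)%N]prednK ?subn_gt0 //= Pd addn0.
Qed.

Lemma I2 (a : 'I_2) : a = ord0 \/ a = ord_max.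
Proof.
case: a => [[|[|k]] Ha]; [left|right|by []]; exact: val_inj.
Qed.

Lemma I2_trans (a b c : 'I_2) : a != b -> b != c -> a = c.
Proof.
by case: (I2 a) => ->; case: (I2 b) => ->; case: (I2 c) => ->.
Qed.

Lemma I2_neq0 (a b : 'I_2) : (a != ord0) = (b != ord0) -> a = b.
Proof.
by case: (I2 a) => ->; case: (I2 b) => ->.
Qed.

Lemma other m (i j : 'I_m.+1) : 2 <= m -> exists k : 'I_m.+1, (k != i) && (k != j).
Proof.
move=> m2; case: (pickP [pred k : 'I_m.+1 | (k != i) && (k != j)]) => [k Hk|H].
  by exists k.
suff: m.+1 <= 2 by rewrite ltnS leqNgt m2.
apply: (@leq_trans #|[set i; j]|); last by rewrite cards2; case: (i != j).
rewrite -{1}(card_ord m.+1); apply: subset_leq_card; apply/subsetP => k _.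
rewrite !inE; move: (H k) => /= /negbT; by rewrite negb_and !negbK.
Qed.

Definition D m (x y : 'I_2 * 'I_m.+1) : nat :=
  if x == y then 0 else if x.1 == y.1 then 2 else if x.2 == y.2 then 3 else 1.

Lemma Dodd m (x y : 'I_2 * 'I_m.+1) : odd (D x y) = (x.1 != y.1).
Proof.
case: x => a i; case: y => b j; rewrite /D xpair_eqE /=.
by case: (a == b); case: (i == j).
Qed.

Lemma D03 m (x y : 'I_2 * 'I_m.+1) : (D x y == 0) || (D x y == 3) = (x.2 == y.2).
Proof.
case: x => a i; case: y => b j; rewrite /D xpair_eqE /=.
by case: (a == b); case: (i == j).
Qed.

Lemma D_same m (a : 'I_2) (i j : 'I_m.+1) w : i != w.2 -> j != w.2 ->
  D (a, i) w = D (a, j) w.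
Proof.
case: w => b k /= hi hj; rewrite /D !xpair_eqE /=.
by rewrite (negbTE hi) (negbTE hj) !andbF.
Qed.

Lemma D_lt4 m (x y : 'I_2 * 'I_m.+1) : D x y < 4.
Proof. by rewrite /D; case: (x == y); case: (x.1 == y.1); case: (x.2 == y.2). Qed.

Lemma D_eq0 m (x y : 'I_2 * 'I_m.+1) : (D x y == 0) = (x == y).
Proof. by rewrite /D; case: (x == y); case: (x.1 == y.1); case: (x.2 == y.2). Qed.

Lemma walk2 m (x y : 'I_2 * 'I_m.+1) :
  walk (tensor_graph (complete_graph 2) (complete_graph m.+1)) x y 2 -> x.1 = y.1.
Proof.
rewrite walkS => /existsP[z /andP[/andP[h1 _]]].
rewrite walk1 => /andP[h2 _]; exact: I2_trans h1 h2.
Qed.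

Lemma walkD m (x y : 'I_2 * 'I_m.+1) : 2 <= m ->
  walk (tensor_graph (complete_graph 2) (complete_graph m.+1)) x y (D x y) /\
  forall k, k < D x y ->
    ~~ walk (tensor_graph (complete_graph 2) (complete_graph m.+1)) x y k.
Proof.
move=> m2.
have nw0 : x != y -> ~~ walk (tensor_graph (complete_graph 2) (complete_graph m.+1)) x y 0.
  by rewrite walk0.
have nw1 : ~~ ((x.1 != y.1) && (x.2 != y.2)) ->
    ~~ walk (tensor_graph (complete_graph 2) (complete_graph m.+1)) x y 1.
  by rewrite walk1.
have [b Hb] : exists b : 'I_2, b != x.1.
  by case: (I2 x.1) => ->; [exists ord_max|exists ord0].
rewrite /D; case: eqP => [<-|/eqP nxy].
  by split; [rewrite walk0|].
case: eqP => [e1|/eqP n1].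
  have n2 : x.2 != y.2.
    apply: contra nxy => /eqP e2; case: x e1 e2 {nw0 nw1 Hb} => ? ?; case: y => ? ? /= -> ->.
    by [].
  split; last first.
    case=> [|[|//]] _; [exact: nw0|apply: nw1; rewrite e1 eqxx //].
  have [k /andP[k1 k2]] := other x.2 y.2 m2.
  rewrite walkS; apply/existsP; exists (b, k); apply/andP; split.
    by apply/andP; split; rewrite /complete_graph /= eq_sym.
  rewrite walk1; apply/andP; split; rewrite /complete_graph /= //; rewrite -e1 //.
case: eqP => [e2|/eqP n2].
  split; last first.
    case=> [|[|[|//]]] _; [exact: nw0|apply: nw1; rewrite e2 eqxx andbF//|].
    by apply/negP => /walk2 /eqP; rewrite (negbTE n1).
  have [k /andP[k1 _]] := other x.2 x.2 m2.
  have [k' /andP[k'1 k'2]] := other x.2 k m2.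
  rewrite walkS; apply/existsP; exists (y.1, k); apply/andP; split.
    by apply/andP; split; rewrite /complete_graph /= // eq_sym.
  rewrite walkS; apply/existsP; exists (x.1, k'); apply/andP; split.
    by apply/andP; split; rewrite /complete_graph /= // eq_sym.
  rewrite walk1; apply/andP; split; rewrite /complete_graph /= //; rewrite -e2 //.
split; first by rewrite walk1; apply/andP.
by case=> // _; exact: nw0.
Qed.

Lemma distE m (x y : 'I_2 * 'I_m.+1) : 2 <= m ->
  dist (tensor_graph (complete_graph 2) (complete_graph m.+1)) x y = D x y.
Proof.
move=> m2; have [W NW] := walkD x y m2.
apply: find_iota0 => //.
apply: (leq_trans (D_lt4 x y)).
by rewrite card_prod !card_ord; lia.
Qed.

Theorem proposition3p2 (n : nat) :
  (n = 2 -> ~ connected_graph (tensor_graph (complete_graph 2) (complete_graph n))) /\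
  (3 <= n ->
     connected_graph (tensor_graph (complete_graph 2) (complete_graph n)) /\
     metric_dim (tensor_graph (complete_graph 2) (complete_graph n)) = n - 1).
Proof.
split.
  move=> -> H.
  have inv : forall p (u : 'I_2 * 'I_2),
      path (tensor_graph (complete_graph 2) (complete_graph 2)) u p ->
      (val (last u p).1 == val (last u p).2) = (val u.1 == val u.2).
    elim=> [//|z p IH] u /= /andP[/andP[h1 h2] hp].
    rewrite IH //; case: u h1 h2 {hp} => a i; case: z => c k /= h1 h2.
    by case: (I2 a) h1 => ->; case: (I2 c) => ->; case: (I2 i) h2 => ->; case: (I2 k) => ->.
  have /connectP[p hp hl] := H (ord0, ord0) (ord0, ord_max).
  by have := inv _ _ hp; rewrite -hl.
case: n => [//|m] m3; have m2 : 2 <= m by [].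
pose e := tensor_graph (complete_graph 2) (complete_graph m.+1).
have dE : forall x y, dist e x y = D x y by move=> x y; exact: distE.
split.
  by move=> u v; have [W _] := walkD u v m2; exact: walk_connect W.
have resT : resolving e [set: 'I_2 * 'I_m.+1].
  apply/forallP => x; apply/forallP => y; apply/implyP => /forallP /(_ y).
  by rewrite in_setT /= !dE -D_eq0 => /eqP ->; rewrite D_eq0.
rewrite /metric_dim; case: arg_minnP => // W resW minW.
pose W0 := [set ((ord0 : 'I_2), i) | i in [set~ (@ord_max m)]].
have cW0 : #|W0| = m.
  rewrite card_imset ?cardsC1 ?card_ord //.
  by move=> i j [].
have resW0 : resolving e W0.
  apply/forallP => -[a i]; apply/forallP => -[b j]; apply/implyP => /forallP H.
  have H' : forall w, w \in W0 -> D (a, i) w = D (b, j) w.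
    by move=> w Hw; move: (H w); rewrite Hw /= !dE => /eqP.
  have o0 : (ord0, ord0) \in W0.
    by apply: imset_f; rewrite !inE; apply/eqP => /(congr1 val) /=; case: (m) m2.
  have eab : a = b.
    apply: I2_neq0; have := congr1 odd (H' _ o0); by rewrite !Dodd.
  have key : forall (i j : 'I_m.+1) (a : 'I_2), i != ord_max ->
      (forall w, w \in W0 -> D (a, i) w = D (a, j) w) -> j = i.
    move=> i0 j0 a0 hi H0.
    have /H0 : (ord0, i0) \in W0 by apply: imset_f; rewrite !inE.
    move/(congr1 (fun d => (d == 0) || (d == 3))); rewrite !D03 /= eqxx.
    by move/esym/eqP.
  subst b; rewrite xpair_eqE eqxx /=.
  case: (eqVneq i ord_max) => [hi|hi]; last by rewrite (key i j a hi H').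
  case: (eqVneq j ord_max) => [hj|hj]; first by rewrite hi hj.
  by rewrite (key j i a hj) // => w Hw; rewrite H'.
have := minW _ resW0; rewrite cW0 => le1.
rewrite subn1 /=; apply/eqP; rewrite eqn_leq le1 /=.
pose C := [set i : 'I_m.+1 | ((ord0, i) \in W) || ((ord_max, i) \in W)].
have CW : #|C| <= #|W|.
  apply: (leq_trans _ (leq_imset_card snd W)); apply: subset_leq_card.
  apply/subsetP => i; rewrite inE => /orP[h|h].
    by have := imset_f snd h.
  by have := imset_f snd h.
have nC : #|~: C| <= 1.
  apply/card_le1_eqP => i j; rewrite !inE !negb_or => /andP[i0 i1] /andP[j0 j1].
  have nin : forall (k : 'I_m.+1) w, ((ord0, k) \notin W) -> ((ord_max, k) \notin W) ->
      w \in W -> k != w.2.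
    move=> k [c l] h0 h1 hw /=; apply/eqP => ekl; subst l.
    by case: (I2 c) hw => -> hw; [rewrite hw in h0|rewrite hw in h1].
  have /forallP/(_ (ord0, i))/forallP/(_ (ord0, j))/implyP := resW.
  rewrite xpair_eqE eqxx /= => h; apply/eqP; rewrite eq_sym; apply: h.
  apply/forallP => w; apply/implyP => hw; rewrite !dE.
  by rewrite (D_same ord0 (nin _ _ i0 i1 hw) (nin _ _ j0 j1 hw)).
have := cardsC C; rewrite card_ord => hC.
have := leq_add CW nC; rewrite hC addn1 ltnS.
by [].
Qed.
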